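(* Let $A\in\mathbb{R}^{nd\times nd}$ be symmetric with $A\succ0$ and $b\in\mathbb{R}^{nd}$, and suppose $Au+b=0$ has a unique solution $u_*$. Consider the iteration $$u_{\ell+1}=u_\ell-\delta\eta\,(A u_{\ell-1}+b),\qquad \ell\ge1,$$ with $u_0=u_1=0$. Then, for $\delta\eta\in\big(0,1/(4\lambda_{\max}(A))\big)$, $u_\ell\to u_*$ as $\ell\to\infty$.
   Context: $\lambda_{\max}(A)$ denotes the largest eigenvalue of $A$. In the paper, $A=(I-\frac{\partial c}{\partial p})^\top(I-\frac{\partial c}{\partial p})$ and $Au+b=\nabla F(u)$ for the least-squares objective $F$ of the coverage control problem. *)

(* Defs.v *)
From HB Require Import structures.
From mathcomp Require Import all_boot all_order all_algebra.
From mathcomp Require Import all_classical all_reals all_analysis.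
Set Implicit Arguments. Unset Strict Implicit. Unset Printing Implicit Defensive.
Import Order.TTheory GRing.Theory Num.Theory.
Import numFieldNormedType.Exports.
Local Open Scope ring_scope.
Local Open Scope classical_set_scope.

Definition posdefmx (R : realType) (m : nat) (A : 'M[R]_m) : Prop :=
  forall x : 'cV[R]_m, x != 0 -> 0 < (x^T *m A *m x) 0 0.

Definition lambda_max (R : realType) (m : nat) (A : 'M[R]_m) : R :=
  sup [set a : R | eigenvalue A a].

(* Main.v *)
Require Import Defs.
From HB Require Import structures.
From mathcomp Require Import all_boot all_order all_algebra.
From mathcomp Require Import all_classical all_reals all_analysis.
From mathcomp Require Import complex spectral ring lra.
Import Order.TTheory GRing.Theory Num.Theory.
Import numFieldNormedType.Exports.
Local Open Scope ring_scope.
Local Open Scope classical_set_scope.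

Fixpoint sp {R : realType} (c : R) (l : nat) : R * R :=
  match l with
  | 0%N => (1, 1)
  | l'.+1 => let p := sp c l' in (p.2, p.2 - c * p.1)
  end.

Lemma sp_rec (R : realType) (c : R) l :
  (sp c l.+2).1 = (sp c l.+1).1 - c * (sp c l).1.
Proof. by []. Qed.

Lemma sp_cvg (R : realType) (c : R) : 0 < c -> 4 * c < 1 ->
  (fun l => (sp c l).1) @ \oo --> 0.
Proof.
move=> c0 c1.
set q := Num.sqrt (1 - 4 * c).
have q0 : 0 < q by rewrite sqrtr_gt0; lra.
have q1 : q < 1.
  by rewrite /q -[X in _ < X]sqrtr1 ltr_sqrt //; lra.
have q2 : q ^+ 2 = 1 - 4 * c by rewrite sqr_sqrtr //; lra.
set r1 := (1 + q) / 2; set r2 := (1 - q) / 2.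
set al := (1 + q) / (2 * q); set be := (q - 1) / (2 * q).
have h1 : r1 * r1 = r1 - c.
  apply/eqP; rewrite -subr_eq0; apply/eqP.
  have -> : r1 * r1 - (r1 - c) = (q ^+ 2 - (1 - 4 * c)) / 4 by rewrite /r1; field.
  by rewrite q2 subrr mul0r.
have h2 : r2 * r2 = r2 - c.
  apply/eqP; rewrite -subr_eq0; apply/eqP.
  have -> : r2 * r2 - (r2 - c) = (q ^+ 2 - (1 - 4 * c)) / 4 by rewrite /r2; field.
  by rewrite q2 subrr mul0r.
have qn0 : q != 0 by rewrite gt_eqF.
have cf : forall l, (sp c l).1 = al * r1 ^+ l + be * r2 ^+ l /\
                    (sp c l.+1).1 = al * r1 ^+ l.+1 + be * r2 ^+ l.+1.
  elim=> [|l [IH1 IH2]].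
    by split; rewrite /= ?expr0 ?expr1 /al /be /r1 /r2; field.
  split => //; rewrite sp_rec IH1 IH2.
  have e1 : r1 ^+ l.+2 = (r1 - c) * r1 ^+ l by rewrite !exprS mulrA h1.
  have e2 : r2 ^+ l.+2 = (r2 - c) * r2 ^+ l by rewrite !exprS mulrA h2.
  rewrite e1 e2 !exprS; ring.
have -> : (fun l => (sp c l).1) = (fun l => al * r1 ^+ l + be * r2 ^+ l).
  by apply: funext => l; case: (cf l).
have n1 : `|r1| < 1 by rewrite ger0_norm /r1; lra.
have n2 : `|r2| < 1 by rewrite ger0_norm /r2; lra.
have k1 : (fun x => al * r1 ^+ x) @ \oo --> al * 0 by apply: cvgMr; apply: cvg_expr.
have k2 : (fun x => be * r2 ^+ x) @ \oo --> be * 0 by apply: cvgMr; apply: cvg_expr.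
have := cvgD k1 k2.
rewrite !mulr0 addr0 => H; exact: H.
Qed.
Lemma Re_add (R : rcfType) (x y : R[i]) : complex.Re (x + y) = complex.Re x + complex.Re y.
Proof. by case: x; case: y. Qed.

Lemma Re_sum (R : rcfType) (I : Type) (r : seq I) (F : I -> R[i]) :
  complex.Re (\sum_(j <- r) F j) = \sum_(j <- r) complex.Re (F j).
Proof.
elim: r => [|x r IH]; first by rewrite !big_nil.
by rewrite !big_cons Re_add IH.
Qed.

Lemma Re_realM (R : rcfType) (x : R) (z : R[i]) :
  complex.Re ((x%:C)%C * z) = x * complex.Re z.
Proof. by case: z => a b /=; rewrite mul0r subr0. Qed.

Lemma real_C (R : rcfType) (x : R) : (x%:C)%C \is Num.real.
Proof.
rewrite realE !lecE /= eqxx /=.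
by case: (real_ge0P (num_real x)) => h; rewrite ?h //= ltW.
Qed.

Lemma decomp (R : realType) m (A : 'M[R]_m) (e : 'cV[R]_m) : A \is symmetricmx ->
  exists (mu : 'I_m -> R) (w : 'I_m -> 'cV[R]_m),
   [/\ \sum_j w j = e, forall j, A *m w j = mu j *: w j &
       forall a, eigenvalue A a -> exists j, a = mu j].
Proof.
move=> Asym.
pose Ac := map_mx (real_complex R) A.
have AT : A^T = A.
  have /is_hermitianmxP E := Asym.
  by rewrite {2}E expr0 scale1r; apply/matrixP => i j; rewrite !mxE.
have AcT : Ac^T = Ac by rewrite /Ac map_trmx AT.
have Acsym : Ac \is symmetricmx.
  apply/is_hermitianmxP; rewrite expr0 scale1r; apply/matrixP => i j; rewrite !mxE /=.
  by rewrite -{1}AT mxE.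
have Acreal : Ac \is a mxOver Num.real.
  by apply/mxOverP => i j; rewrite mxE real_C.
have [P [D [Pu HAc Dr]]] : exists P (D : 'rV_m), [/\ P \in unitmx,
    Ac = invmx P *m diag_mx D *m P & forall j, ((complex.Re (D 0 j))%:C)%C = D 0 j].
  exists (spectralmx Ac), (spectral_diag Ac); split.
  - exact: spectral_unit.
  - by apply/orthomx_spectralP; apply: symmetric_normalmx.
  - move=> j; apply: RRe_real.
    have := hermitian_spectral_diag_real (realsym_hermsym Acsym Acreal).
    by move/mxOverP; apply.
pose Pinv := invmx P.
have AcP : Ac *m Pinv = Pinv *m diag_mx D.
  by rewrite {1}HAc -!mulmxA mulmxV // mulmx1.
pose ec := map_mx (real_complex R) e.
pose Pe := P *m ec.
pose z j := Pe j 0 *: col j Pinv.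
pose mu j := complex.Re (D 0 j).
pose w j := map_mx (@complex.Re R) (z j).
exists mu, w; split.
- apply/matrixP => i k; rewrite summxE.
  transitivity (complex.Re (\sum_j z j i k)).
    by rewrite Re_sum; apply: eq_bigr => j _; rewrite mxE.
  rewrite -summxE.
  have -> : \sum_j z j = Pinv *m Pe.
    apply/matrixP => i' k'; rewrite summxE !mxE; apply: eq_bigr => j _.
    by rewrite !mxE (ord1 k') mulrC.
  by rewrite /Pe mulKmx // mxE.
- move=> j; apply/matrixP => i k.
  have Hc : forall a b, (Ac *m col j Pinv) a b = Pinv a j * D 0 j.
    move=> a b; transitivity ((Ac *m Pinv) a j).
      by rewrite !mxE; apply: eq_bigr => l _; rewrite !mxE.
    by rewrite AcP mul_mx_diag mxE.
  have Hz : Ac *m z j = D 0 j *: z j.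
    by apply/matrixP => a b; rewrite /z -scalemxAr [LHS]mxE Hc !mxE; ring.
  transitivity (complex.Re ((Ac *m z j) i k)).
    rewrite !mxE Re_sum; apply: eq_bigr => l _; rewrite !mxE Re_realM //.
  by rewrite Hz mxE -Dr Re_realM !mxE.
- move=> a /eigenvalueP [v Hv vn0].
  pose vc := map_mx (real_complex R) v.
  have Hvc : vc *m Ac = (a%:C)%C *: vc by rewrite /vc /Ac -map_mxM Hv map_mxZ.
  pose y := vc *m Pinv.
  have Hy : y *m diag_mx D = (a%:C)%C *: y.
    by rewrite /y -mulmxA -AcP mulmxA Hvc scalemxAl.
  have yn0 : y != 0.
    apply: contraNneq vn0 => y0.
    have : vc = y *m P by rewrite /y /Pinv mulmxKV.
    by rewrite y0 mul0mx => /eqP; rewrite /vc map_mx_eq0.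
  have [j yj] : exists j, y 0 j != 0.
    case: (pickP (fun j => y 0 j != 0)) => [j Hj|H]; first by exists j.
    exfalso; move/eqP: yn0; apply; apply/rowP => j.
    by rewrite [RHS]mxE; apply/eqP; move: (H j); case: eqP.
  exists j; have := congr1 (fun M : 'rV[R[i]]_m => M 0 j) Hy.
  rewrite mul_mx_diag [LHS]mxE [RHS]mxE [LHS]mulrC => /(mulIf yj) E.
  by rewrite /mu E.
Qed.

Lemma cvg_sum0 (R : realType) (V : normedModType R) (I : Type) (r : seq I)
  (f : I -> nat -> V) : (forall j, f j @ \oo --> (0 : V)) ->
  (fun l => \sum_(j <- r) f j l) @ \oo --> (0 : V).
Proof.
move=> Hf; elim: r => [|x r IH].
  by under eq_fun do rewrite big_nil; apply: cvg_cst.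
under eq_fun do rewrite big_cons.
by have := cvgD (Hf x) IH; rewrite addr0 => H; exact: H.
Qed.

Theorem theorem4 (R : realType) (n d : nat) (A : 'M[R]_(n * d)) (b : 'cV[R]_(n * d))
  (ustar : 'cV[R]_(n * d)) (delta eta : R) (u : nat -> 'cV[R]_(n * d)) :
  A \is symmetricmx ->
  posdefmx A ->
  A *m ustar + b = 0 ->
  (forall v : 'cV[R]_(n * d), A *m v + b = 0 -> v = ustar) ->
  0 < delta * eta -> delta * eta < 1 / (4 * lambda_max A) ->
  u 0%N = 0 -> u 1%N = 0 ->
  (forall l : nat, (1 <= l)%N ->
     u l.+1 = u l - (delta * eta) *: (A *m u l.-1 + b)) ->
  u @ \oo --> ustar.
Proof.
move=> Asym Apd Hst Huniq h0 h1 u0 u1 Hrec.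
set h := delta * eta in h0 h1 Hrec.
have AT : A^T = A.
  have /is_hermitianmxP E := Asym.
  by rewrite {2}E expr0 scale1r; apply/matrixP => i j; rewrite !mxE.
have [mu [w [Hw HAw Heig]]] := @decomp R _ A (- ustar) Asym.
have key : forall j, w j != 0 -> 0 < h * mu j /\ 4 * (h * mu j) < 1.
  move=> j wn0.
  have eig : eigenvalue A (mu j).
    apply/eigenvalueP; exists (w j)^T; last by rewrite trmx_eq0.
    by rewrite -{1}AT -trmx_mul HAw linearZ.
  have mupos : 0 < mu j.
    have := Apd (w j) wn0; rewrite -mulmxA HAw -scalemxAr mxE.
    have : 0 <= ((w j)^T *m w j) 0 0.
      by rewrite mxE sumr_ge0 // => i _; rewrite !mxE -expr2 sqr_ge0.
    move=> H1 H2; nra.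
  have ub : has_sup [set a | eigenvalue A a].
    split; first by exists (mu j).
    exists (\sum_k `|mu k|) => a /Heig [k ->].
    apply: le_trans (ler_norm _) _.
    by rewrite (bigD1 k) //= lerDl sumr_ge0.
  have lem : mu j <= lambda_max A := sup_upper_bound ub eig.
  have lam0 : 0 < lambda_max A by apply: lt_le_trans lem.
  move: h1; rewrite ltr_pdivlMr; last by rewrite mulr_gt0.
  move=> H; split; first by rewrite mulr_gt0.
  nra.
have claim : forall l, u l = ustar + \sum_j (sp (h * mu j) l).1 *: w j /\
                       u l.+1 = ustar + \sum_j (sp (h * mu j) l.+1).1 *: w j.
  elim=> [|l [IH1 IH2]].
    by rewrite u0 u1 /=; under eq_bigr do rewrite scale1r; rewrite Hw subrr.
  split => //.
  rewrite Hrec //; have -> : l.+1.-1 = l by [].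
  rewrite IH1 IH2.
  rewrite mulmxDr [A *m ustar + _ + b]addrAC Hst add0r mulmx_sumr.
  have -> : \sum_i A *m ((sp (h * mu i) l).1 *: w i) =
      \sum_i ((sp (h * mu i) l).1 * mu i) *: w i.
    by apply: eq_bigr => i _; rewrite -scalemxAr HAw scalerA.
  rewrite scaler_sumr -addrA -sumrB; congr (_ + _); apply: eq_bigr => j _.
  rewrite sp_rec scalerBl scalerA; congr (_ - _ *: _); ring.
have -> : u = (fun l => ustar + \sum_j (sp (h * mu j) l).1 *: w j).
  by apply: funext => l; case: (claim l).
have Hs : (fun l => \sum_j (sp (h * mu j) l).1 *: w j) @ \oo --> (0 : 'cV[R]_(n * d)).
  apply: cvg_sum0 => j.
  have [->|wn0] := eqVneq (w j) 0.
    by under eq_fun do rewrite scaler0; apply: cvg_cst.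
  have [k1 k2] := key j wn0.
  have : (fun l => (sp (h * mu j) l).1 *: w j) @ \oo --> (0 : R) *: w j.
    by apply: cvgZl; apply: sp_cvg.
  rewrite scale0r => H; exact: H.
suff H : (fun l => ustar + \sum_j (sp (h * mu j) l).1 *: w j) @ \oo --> ustar + 0.
  by rewrite addr0 in H.
apply: cvgD; [exact: cvg_cst | exact: Hs].
Qed.
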